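(* Let $p$ be a prime with $p \equiv 1 \pmod 6$. Then for every integer $e \ge 1$ there is a unique (up to isomorphism) 6-valent first-kind Frobenius circulant with cyclic kernel of order $p^e$, namely $\Gamma(p^e) = TL_{p^e}(a_e, a_e - 1, 1)$, where $a_e \equiv (p^e+1)(v+1)/2 \pmod{p^e}$ with $v$ a solution of $x^2 \equiv -3 \pmod{p^e}$.
   Context: For $n\ge 7$, $\mathbb{Z}_n$ is the integers modulo $n$ with residue classes $[m]$, and $\mathbb{Z}_n^*$ its unit group acting on $\mathbb{Z}_n$ by multiplication. $\mathrm{Cay}(K,S)$ is the Cayley graph (vertices $K$, $x\sim y$ iff $xy^{-1}\in S$). For integers $a,b,c$ with $a,b,c,n-a,n-b,n-c$ pairwise distinct modulo $n$, $TL_n(a,b,c)=\mathrm{Cay}(\mathbb{Z}_n,\{\pm[a],\pm[b],\pm[c]\})$. A Frobenius group is a transitive, non-regular permutation group in which only the identity fixes two points; a finite one is $K\rtimes H$ with regular normal kernel $K$ and point stabiliser $H$ acting on $K$ by conjugation. A first-kind $K\rtimes H$-Frobenius graph is $\mathrm{Cay}(K,s^H)$ with $\langle s^H\rangle=K$ and $|H|$ even or $s$ an involution. A 6-valent first-kind Frobenius circulant with cyclic kernel of order $n$ is a 6-valent $TL_n(a,b,c)$ that is a first-kind $\mathbb{Z}_n\rtimes H$-Frobenius graph for some $H\le\mathbb{Z}_n^*$ such that $\mathbb{Z}_n\rtimes H$ (acting by $[x]^{([y],[m])}=[(x+y)m]$) is a Frobenius group with kernel $\mathbb{Z}_n$.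 *)

(* Defs.v *)
From HB Require Import structures.
From mathcomp Require Import all_boot all_order all_algebra all_fingroup.
Set Implicit Arguments. Unset Strict Implicit. Unset Printing Implicit Defensive.
Import GRing.Theory.
Local Open Scope ring_scope.

(* Elements of Z_n are taken in 'Z_n (we always have n >= 7 > 1). *)

Definition affine n (y : 'Z_n) (m : {unit 'Z_n}) (x : 'Z_n) : 'Z_n :=
  (x + y) * val m.

(* Z_n x| H (acting as above) is a Frobenius group (transitive, non-regular,
   only the identity fixes two points) with Frobenius kernel Z_n, i.e. the
   identity together with the fixed-point-free elements are exactly the
   translations ([y],[1]).  The action is faithful, so group elements are
   identified with pairs (y, m). *)
Definition frobenius_affine n (H : {set {unit 'Z_n}}) : Prop :=
  [/\ (forall x x' : 'Z_n, exists y, exists2 m, m \in H & affine y m x = x'),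
      (exists y, exists2 m, m \in H &
          ~ (y = 0 /\ m = 1%g) /\ exists x, affine y m x = x),
      (forall y m, m \in H -> forall x1 x2, x1 != x2 ->
          affine y m x1 = x1 -> affine y m x2 = x2 -> y = 0 /\ m = 1%g)
    & (forall y m, m \in H ->
          ((forall x, affine y m x <> x) \/ (y = 0 /\ m = 1%g)) <-> m = 1%g)].

Definition cay n (S : {set 'Z_n}) : rel 'Z_n := fun x y => (x - y) \in S.

Definition sorbit n (H : {set {unit 'Z_n}}) (s : 'Z_n) : {set 'Z_n} :=
  [set s * val h | h in H].

Definition TLset n (a b c : 'Z_n) : {set 'Z_n} := [set a; -a; b; -b; c; -c].
Definition TL_ok n (a b c : 'Z_n) : bool := uniq [:: a; b; c; -a; -b; -c].

Definition first_kind n (H : {set {unit 'Z_n}}) (s : 'Z_n) : Prop :=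
  <<sorbit H s>>%g = [set: 'Z_n] /\
  (~~ odd #|H| \/ (s != 0 /\ s + s = 0)).

Definition FC6 n (a b c : 'Z_n) : Prop :=
  TL_ok a b c /\
  exists (H : {group {unit 'Z_n}}) (s : 'Z_n),
    [/\ frobenius_affine H, first_kind H s & cay (TLset a b c) =2 cay (sorbit H s)].

Definition graph_iso (T : finType) (r1 r2 : rel T) : Prop :=
  exists f : T -> T, bijective f /\ forall x y, r1 x y = r2 (f x) (f y).

(* Main.v *)
Require Import Defs.
From HB Require Import structures.
From mathcomp Require Import all_boot all_order all_algebra all_fingroup all_solvable.
From mathcomp Require Import zify ring.
Import GRing.Theory.
Local Open Scope ring_scope.

Lemma genT n (A : {set 'Z_n}) : (1 : 'Z_n) \in A -> <<A>>%g = setT.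
Proof.
move=> h; apply/eqP; rewrite eqEsubset subsetT /=.
have := Zp_cycle (Zp_trunc n).+1 => E.
rewrite E cycle_subG; exact: mem_gen.
Qed.

Section S.
Variables (p e : nat).
Hypotheses (pp : prime p) (p6 : (p %% 6 = 1)%N) (e0 : (0 < e)%N).
Local Notation Z := 'Z_(p ^ e).

Lemma p_ge7 : (7 <= p)%N.
Proof. have := prime_gt1 pp; lia. Qed.

Lemma n_gt1 : (1 < p ^ e)%N.
Proof. by rewrite -{1}(expn0 p) ltn_exp2l // prime_gt1. Qed.

Lemma unitN k : ((k%:R : Z) \is a GRing.unit) = ~~ (p %| k)%N.
Proof. by rewrite unitZpE ?n_gt1 // coprime_pexpl // prime_coprime. Qed.

Lemma unitE (x : Z) : (x \is a GRing.unit) = ~~ (p %| x)%N.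
Proof. by rewrite -unitN natr_Zp. Qed.

Lemma nonunitD (x y : Z) : x \isn't a GRing.unit -> y \isn't a GRing.unit ->
  (x + y) \isn't a GRing.unit.
Proof.
rewrite -[x]natr_Zp -[y]natr_Zp -natrD !unitN !negbK; exact: dvdn_add.
Qed.

Lemma unit2 : (2 : Z) \is a GRing.unit.
Proof. rewrite unitN; apply/negP => /dvdn_leq; have := p_ge7; lia. Qed.

Lemma unit3 : (3 : Z) \is a GRing.unit.
Proof. rewrite unitN; apply/negP => /dvdn_leq; have := p_ge7; lia. Qed.

Lemma zero_n : ((p ^ e)%:R : Z) = 0.
Proof. by rewrite -Zp_nat_mod ?n_gt1 // modnn. Qed.

Lemma half2 : 2 * (((p ^ e).+1)./2)%:R = 1 :> Z.
Proof.
have : (p %% 2 = 1)%N by rewrite -(modn_dvdm _ (isT : (2 %| 6)%N)) p6.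
rewrite modn2 => op'.
have op : odd p by move: op'; case: (odd p).
have ope : odd (p ^ e) by rewrite oddX op orbT.
have E : (((p ^ e).+1)./2 * 2 = (p ^ e).+1)%N.
  by rewrite -[RHS]odd_double_half /= ope /= muln2.
by rewrite -natrM mulnC E [LHS]mulrSr zero_n add0r.
Qed.

Lemma local0 (x y : Z) : x * y = 0 -> (y - x) \is a GRing.unit -> x = 0 \/ y = 0.
Proof.
move=> xy u.
case Ux: (x \is a GRing.unit).
  by right; apply: (mulrI Ux); rewrite mulr0.
case Uy: (y \is a GRing.unit).
  by left; apply: (mulIr Uy); rewrite mul0r.
have : (y - x) \isn't a GRing.unit by apply: nonunitD; rewrite ?unitrN ?Ux ?Uy.
by rewrite u.
Qed.


Lemma cardT (b c d : Z) : TL_ok b c d -> #|TLset b c d| = 6%N.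
Proof.
move=> /card_uniqP H.
rewrite -[RHS]H -cardsE; apply: eq_card => x; rewrite !inE.
by case: (x == b); case: (x == -b); case: (x == c); case: (x == -c);
   case: (x == d); case: (x == -d).
Qed.

Lemma frob_unit (H : {set {unit Z}}) : frobenius_affine H ->
  forall m, m \in H -> m != 1%g -> (val m - 1) \is a GRing.unit.
Proof.
case=> _ _ _ F4 m mH m1.
apply/negPn/negP => nu.
have Um : val m \is a GRing.unit := valP m.
have : m = 1%g.
  apply/(F4 (- (val m)^-1) m mH); left => x.
  rewrite /affine => E; apply: (negP nu); apply/unitrPr; exists x.
  have -> : (val m - 1) * x = (x - (val m)^-1) * val m - x + (val m)^-1 * val m
    by ring.
  by rewrite E subrr add0r mulVr.
by move=> E; rewrite E eqxx in m1.
Qed.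

Lemma frob_of (H : {set {unit Z}}) : 1%g \in H ->
  (exists2 m, m \in H & m != 1%g) ->
  (forall m, m \in H -> m != 1%g -> (val m - 1) \is a GRing.unit) ->
  frobenius_affine H.
Proof.
move=> H1 [m0 m0H m01] U; split.
- move=> x x'; exists (x' - x); exists 1%g => //.
  by rewrite /affine FinRing.val_unit1 mulr1 addrC subrK.
- exists 0; exists m0 => //; split.
    by case=> _ E; rewrite E eqxx in m01.
  by exists 0; rewrite /affine addr0 mul0r.
- move=> y m mH x1 x2 nx E1 E2; case: (eqVneq m 1%g) => [m1 | m1].
    split=> //; move: E1; rewrite m1 /affine => E1; rewrite FinRing.val_unit1 mulr1 in E1.
    by apply: (addrI x1); rewrite E1 addr0.
  have u := U m mH m1.
  have : (x1 - x2) * (val m - 1) = 0.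
    have -> : (x1 - x2) * (val m - 1) =
      ((x1 + y) * val m - x1) - ((x2 + y) * val m - x2) by ring.
    by rewrite /affine in E1 E2; rewrite E1 E2 !subrr ?subr0.
  rewrite -(mul0r (val m - 1)) => /(mulIr u) /eqP; rewrite subr_eq0 => E.
  by rewrite E in nx.
- move=> y m mH; split.
    case=> [fpf | [_ ->] //]; apply/eqP; apply: contraT => m1.
    have u := U m mH m1; exfalso.
    apply: (fpf (- y * val m / (val m - 1))).
    apply/eqP; rewrite /affine -subr_eq0.
    set X := - y * val m / (val m - 1).
    have -> : (X + y) * val m - X = X * (val m - 1) + y * val m by ring.
    by rewrite /X -mulrA mulVr // mulr1 mulNr addNr.
  move=> ->; case: (eqVneq y 0) => [-> | ny]; [right | left] => //.
  move=> x; rewrite /affine FinRing.val_unit1 mulr1 => E.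
  by move/eqP: ny; apply; apply: (addrI x); rewrite E addr0.
Qed.

Lemma cube (r : Z) : r ^+ 3 = 1 -> r != 1 -> r ^+ 2 + r + 1 = 0.
Proof.
move=> r3 r1.
have E0 : (r - 1) * (r ^+ 2 + r + 1) = 0.
  have -> : (r - 1) * (r ^+ 2 + r + 1) = r ^+ 3 - 1 by ring.
  by rewrite r3 subrr.
case Ud: (r - 1 \is a GRing.unit).
  by apply: (mulrI Ud); rewrite mulr0.
exfalso.
have Ug : ((r - 1) ^+ 2 + 3 * (r - 1) + 3) \is a GRing.unit.
  apply/negPn/negP => ng.
  have : (3 : Z) \isn't a GRing.unit.
    have -> : (3 : Z) = ((r - 1) ^+ 2 + 3 * (r - 1) + 3) + - ((r - 1) * ((r - 1) + 3))
      by ring.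
    by apply: nonunitD => //; rewrite unitrN unitrM Ud.
  by rewrite unit3.
have : (r - 1) * ((r - 1) ^+ 2 + 3 * (r - 1) + 3) = 0 * ((r - 1) ^+ 2 + 3 * (r - 1) + 3).
  by rewrite mul0r -E0; ring.
move/(mulIr Ug)/eqP; rewrite subr_eq0 => /eqP E.
by rewrite E eqxx in r1.
Qed.

Lemma exists_v : exists v : Z, v * v = - 3.
Proof.
have d3 : (3 %| #|[set: {unit Z}]%G|)%N.
  rewrite /= (card_units_Zp (ltnW n_gt1)) totient_pfactor //.
  apply: dvdn_mulr; apply/dvdnP; exists (2 * (p %/ 6))%N.
  have := p_ge7; lia.
have [t _ ot] := Cauchy (isT : prime 3) d3.
have t3 : val t ^+ 3 = 1.
  by rewrite -FinRing.val_unitX -ot expg_order FinRing.val_unit1.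
have t1 : val t != 1.
  apply/negP => /eqP E; have : t = 1%g by apply: val_inj; rewrite E FinRing.val_unit1.
  by move=> E1; move: ot; rewrite E1 order1.
have C := cube (val t) t3 t1.
exists (2 * val t + 1).
have -> : (2 * val t + 1) * (2 * val t + 1) = 4 * (val t ^+ 2 + val t + 1) - 3 by ring.
by rewrite C mulr0 sub0r.
Qed.

Section A.
Variables (v a : Z).
Hypotheses (hv : v * v = - 3) (h2a : 2 * a = v + 1).

Lemma m3unit : (- 3 : Z) \is a GRing.unit.
Proof. by rewrite unitrN unit3. Qed.

Lemma unitv : v \is a GRing.unit.
Proof. by have := m3unit; rewrite -hv unitrM => /andP[]. Qed.

Lemma ha2 : a ^+ 2 = a - 1.
Proof.
have X0 : a ^+ 2 - a + 1 = 0.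
  have U4 : (2 * 2 : Z) \is a GRing.unit by rewrite unitrM unit2.
  apply: (mulrI U4); rewrite mulr0.
  have -> : (2 * 2) * (a ^+ 2 - a + 1) = (2 * a) ^+ 2 - 2 * (2 * a) + 4 :> Z by ring.
  rewrite h2a.
  have -> : (v + 1) ^+ 2 - 2 * (v + 1) + 4 = v * v + 3 :> Z by ring.
  by rewrite hv addNr.
have -> : a ^+ 2 = (a ^+ 2 - a + 1) + (a - 1) by ring.
by rewrite X0 add0r.
Qed.

Lemma ha3 : a ^+ 3 = -1.
Proof.
rewrite exprS ha2.
have -> : a * (a - 1) = a ^+ 2 - a by ring.
rewrite ha2; ring.
Qed.

Lemma ha4 : a ^+ 4 = - a.
Proof. by rewrite exprS ha3 mulrN1. Qed.

Lemma ha5 : a ^+ 5 = - (a - 1).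
Proof. by rewrite (exprD _ 2 3) ha2 ha3 mulrN1. Qed.

Lemma ha6 : a ^+ 6 = 1.
Proof. by rewrite (exprD _ 3 3) ha3 mulrNN mulr1. Qed.

Lemma aunit : a \is a GRing.unit.
Proof. by apply/unitrPr; exists (- a ^+ 2); rewrite mulrN -exprS ha3 opprK. Qed.

Lemma a1unit : (a + 1) \is a GRing.unit.
Proof.
have P : (a - 2) * (a + 1) = - 3.
  have -> : (a - 2) * (a + 1) = a ^+ 2 - a - 2 by ring.
  rewrite ha2; ring.
by have := m3unit; rewrite -P unitrM => /andP[].
Qed.

Lemma a2unit : (a - 2) \is a GRing.unit.
Proof.
have P : (a - 2) * (a + 1) = - 3.
  have -> : (a - 2) * (a + 1) = a ^+ 2 - a - 2 by ring.
  rewrite ha2; ring.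
by have := m3unit; rewrite -P unitrM => /andP[].
Qed.

Lemma key k : (0 < k < 6)%N -> (a ^+ k - 1) \is a GRing.unit.
Proof.
case: k => [|[|[|[|[|[|k]]]]]] //= _.
- by rewrite expr1 -ha2 unitrX // aunit.
- rewrite ha2; have -> : a - 1 - 1 = a - 2 by ring.
  exact: a2unit.
- rewrite ha3; have -> : -1 - 1 = - (2 : Z) by ring.
  by rewrite unitrN unit2.
- rewrite ha4; have -> : - a - 1 = - (a + 1) by ring.
  by rewrite unitrN a1unit.
- rewrite ha5; have -> : - (a - 1) - 1 = - a by ring.
  by rewrite unitrN aunit.
Qed.

Lemma ainj i j : (i < 6)%N -> (j < 6)%N -> a ^+ i = a ^+ j -> i = j.
Proof.
wlog le_ij : i j / (i <= j)%N.
  move=> W hi hj E; case: (leqP i j) => h; first exact: W.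
  by apply/esym/W => //; apply: ltnW.
move=> hi hj E; case: (ltngtP i j) le_ij => // lt_ij _.
have U := key (j - i) (ltac:(apply/andP; split; lia)).
have : a ^+ i * (a ^+ (j - i) - 1) = 0.
  by rewrite mulrBr mulr1 -exprD subnKC ?E ?subrr // ltnW.
rewrite -(mulr0 (a ^+ i)) => /(mulrI (unitrX i aunit)) Z0.
by move: U; rewrite Z0 unitr0.
Qed.

Lemma TLok_a : TL_ok a (a - 1) 1.
Proof.
have E : [:: a; a - 1; 1; -a; -(a - 1); -1] =
   map (fun k => a ^+ k) [:: 1; 2; 0; 4; 5; 3]%N
  by rewrite /= expr0 expr1 ha2 ha3 ha4 ha5.
rewrite /TL_ok E map_inj_in_uniq //.
have lt6 : {in [:: 1; 2; 0; 4; 5; 3]%N, forall i, (i < 6)%N} by apply/allP.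
by move=> i j /lt6 hi /lt6 hj; apply: ainj.
Qed.

Lemma memT2 x : (x \in TLset a (a - 1) 1) = (x \in [seq a ^+ k | k <- iota 0 6]).
Proof.
have E : [seq a ^+ k | k <- iota 0 6] = [:: 1; a; a - 1; -1; -a; -(a - 1)]
  by rewrite /= expr0 expr1 ha2 ha3 ha4 ha5.
rewrite E !inE.
by case: (x == a); case: (x == -a); case: (x == a - 1); case: (x == -(a-1));
   case: (x == 1); case: (x == -1).
Qed.

Lemma FC6_a : FC6 a (a - 1) 1.
Proof.
split; first exact: TLok_a.
pose w : {unit Z} := FinRing.unit _ aunit.
have vw k : val (w ^+ k)%g = a ^+ k by rewrite FinRing.val_unitX.
have inW h : h \in <[w]>%g -> exists2 k, (k < 6)%N & val h = a ^+ k.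
  case/cycleP => i ->; exists (i %% 6)%N; first by rewrite ltn_pmod.
  by rewrite vw {1}(divn_eq i 6) exprD mulnC exprM ha6 expr1n mul1r.
have w6 : (w ^+ 6 = 1)%g by apply: val_inj; rewrite vw ha6.
have wk k : (0 < k < 6)%N -> (w ^+ k != 1)%g.
  move=> hk; apply/negP => /eqP E; have := key k hk.
  by rewrite -vw E FinRing.val_unit1 subrr unitr0.
have T2E : TLset a (a - 1) 1 = sorbit <[w]>%G 1.
  apply/setP => x; rewrite memT2; apply/mapP/imsetP.
    case=> k _ ->; exists (w ^+ k)%g; first exact: mem_cycle.
    by rewrite mul1r vw.
  case=> h /inW [k k6 ->] ->; exists k; last by rewrite mul1r.
  by rewrite mem_iota.
exists <[w]>%G, 1; split.
- apply: frob_of; first exact: group1.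
    exists w; first exact: cycle_id.
    by have := wk 1%N isT; rewrite expg1.
  move=> m /inW [k k6 vk] m1.
  case: k k6 vk => [|k] k6 vk.
    by move: m1; rewrite (_ : m = 1%g) ?eqxx //; apply: val_inj; rewrite vk FinRing.val_unit1.
  by rewrite vk; apply: (key k.+1).
- split; first by apply: genT; rewrite -T2E memT2 /= inE eqxx.
  left; rewrite /= -/(order w).
  have d6 : (#[w]%g %| 6)%N by rewrite order_dvdn w6.
  have n2 : ~~ (#[w]%g %| 2)%N by rewrite order_dvdn wk.
  have n3 : ~~ (#[w]%g %| 3)%N by rewrite order_dvdn wk.
  have := dvdn_leq (isT : (0 < 6)%N) d6; have := order_gt0 w.
  move: d6 n2 n3; case: #[w]%g => [|[|[|[|[|[|[|k]]]]]]] //.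
- by move=> x y; rewrite /cay T2E.
Qed.

Lemma uniq_a (b c d : Z) : FC6 b c d ->
  graph_iso (cay (TLset b c d)) (cay (TLset a (a - 1) 1)).
Proof.
move=> [ok [H [s [Fr [Gen _] Cay]]]].
have T1E : TLset b c d = sorbit H s.
  by apply/setP => x; have := Cay x 0; rewrite /cay !subr0.
have sG : group_set [set s * x | x : Z].
  apply/group_setP; split.
    by apply/imsetP; exists 0 => //; rewrite mulr0.
  move=> _ _ /imsetP[x _ ->] /imsetP[y _ ->]; apply/imsetP; exists (x + y) => //.
  exact: (esym (mulrDr s x y)).
have Us : s \is a GRing.unit.
  have sub : (<<sorbit H s>>%g \subset Group sG).
    rewrite gen_subG; apply/subsetP => _ /imsetP[h _ ->].
    by apply/imsetP; exists (val h).
  have : (1 : Z) \in Group sG by apply: (subsetP sub); rewrite Gen inE.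
  by case/imsetP => x _ E; apply/unitrPr; exists x; rewrite -E.
have injs : injective (fun h : {unit Z} => s * val h).
  by move=> h1 h2 /(mulrI Us) /val_inj.
have cH : #|H| = 6%N.
  by rewrite -(cardT _ _ _ ok) T1E /sorbit card_imset.
have U := frob_unit _ Fr.
have [t tH ot] := Cauchy (isT : prime 3) (ltac:(by rewrite cH) : (3 %| #|H|)%N).
have [z zH oz] := Cauchy (isT : prime 2) (ltac:(by rewrite cH) : (2 %| #|H|)%N).
have t3 : val t ^+ 3 = 1.
  by rewrite -FinRing.val_unitX -ot expg_order FinRing.val_unit1.
have t1 : t != 1%g by apply/negP => /eqP E1; move: ot; rewrite E1 order1.
have vt1 : val t != 1.
  apply/negP => /eqP E; move/negP: t1; apply.
  by apply/eqP/val_inj; rewrite E FinRing.val_unit1.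
have Ct := cube (val t) t3 vt1.
have z2 : val z ^+ 2 = 1.
  by rewrite -FinRing.val_unitX -oz expg_order FinRing.val_unit1.
have z1 : z != 1%g by apply/negP => /eqP E1; move: oz; rewrite E1 order1.
have zm : val z = -1.
  have Uz := U z zH z1.
  have : (val z - 1) * (val z + 1) = (val z - 1) * 0.
    have -> : (val z - 1) * (val z + 1) = val z ^+ 2 - 1 by ring.
    by rewrite z2 subrr mulr0.
  move/(mulrI Uz)/eqP; rewrite addr_eq0 => /eqP //.
set r := val t in Ct.
have rr : r - (a - 1) = 0 \/ r + a = 0.
  apply: local0.
    have -> : (r - (a - 1)) * (r + a) = (r ^+ 2 + r + 1) - (a ^+ 2 - (a - 1)) by ring.
    by rewrite Ct ha2 !subrr.
  have -> : (r + a) - (r - (a - 1)) = 2 * a - 1 by ring.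
  by rewrite h2a addrK unitv.
have [g gH ga] : exists2 g, g \in H & val g = a.
  case: rr => [r1 | r2].
- exists (z * t ^+ 2)%g; first by rewrite groupM ?groupX.
  rewrite FinRing.val_unitM FinRing.val_unitX zm -/r.
  have -> : r = a - 1 by apply/eqP; rewrite -subr_eq0 r1.
  by rewrite -ha2 -exprM ha4 mulN1r opprK.
- exists (z * t)%g; first by rewrite groupM.
  rewrite FinRing.val_unitM zm -/r.
  have -> : r = - a by apply/eqP; rewrite -addr_eq0 r2.
  by rewrite mulN1r opprK.
have T1eq : TLset b c d = [set s * u | u in TLset a (a - 1) 1].
  apply/eqP; rewrite eq_sym eqEcard; apply/andP; split.
    apply/subsetP => _ /imsetP[u uT ->]; rewrite memT2 in uT.
    case/mapP: uT => k _ ->; rewrite T1E; apply/imsetP; exists (g ^+ k)%g.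
      exact: groupX.
    by rewrite FinRing.val_unitX ga.
  by rewrite (cardT _ _ _ ok) card_imset ?(cardT _ _ _ TLok_a) //; apply: mulrI.
exists (fun x => s^-1 * x); split.
  by exists (fun x => s * x) => x; rewrite ?mulKr ?mulVKr.
move=> x y; rewrite /cay T1eq -mulrBr.
apply/imsetP/idP.
  by case=> u uT ->; rewrite mulKr.
by move=> h; exists (s^-1 * (x - y)) => //; rewrite mulVKr.
Qed.

End A.

End S.

Theorem corollary2p3 (p e : nat) :
  prime p -> (p %% 6 = 1)%N -> (0 < e)%N ->
  (exists v : 'Z_(p ^ e), v * v = - 3%:R) /\
  forall v : 'Z_(p ^ e), v * v = - 3%:R ->
    let a : 'Z_(p ^ e) := ((p ^ e).+1./2)%:R * (v + 1) in
    FC6 a (a - 1) 1 /\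
    forall b c d : 'Z_(p ^ e), FC6 b c d ->
      graph_iso (cay (TLset b c d)) (cay (TLset a (a - 1) 1)).
Proof.
move=> pp p6 e0; split; first exact: exists_v.
move=> v hv a.
have h2a : 2 * a = v + 1 by rewrite /a mulrA half2 // mul1r.
split; first exact: (FC6_a p e pp p6 e0 v a hv h2a).
move=> b c d; exact: (uniq_a p e pp p6 e0 v a hv h2a).
Qed.
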